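(* If a function $f$ is computable by an $M$-memory $(T(n),IO(n))$-time TM-TLM-BT with block size $B$, then there is an $M$-memory $(T(n)+B\cdot IO(n),\,B\cdot IO(n))$-time TM-TLM that computes $f$.
   Context: A Turing machine with two-level memory (TM-TLM) with main memory size $M$ has three tapes: a main memory tape of $M$ cells, an unbounded external memory tape, and an address tape for the external memory. It has a finite state set, alphabets $\Sigma\subseteq\Gamma$ with a blank, an accepting state, and a transition function $\delta: Q\times\Gamma\to Q\times\Gamma\times\{L,S,R\}$ acting on the main memory tape. There are special read and write states: on entering a read state the machine writes an address $addr$ on the address tape and the main memory cell under the head receives the content of external cell $addr$; on entering a write state, external cell $addr$ receives the content of the main memory cell under the head. Each Read/Write is one IO operation of unit cost, after which the head may move L, R or stay. Time = number of transitions other than Read/Write; IO time = number of Read/Write operations. An $M$-memory $(T(n),IO(n))$-time machine has main memory size $M$, time complexity $O(T(n))$ and IO complexity $O(IO(n))$. A TM-TLM-BT (TM-TLM with block transfer) with block size $B$ is defined like a TM-TLM except that $B$ divides $M$, both the main memory and the external memory are partitioned into aligned blocks of $B$ consecutive cells, and each IO operation transfers an entire block: even when a single cell is requested, all $B$ cells of the block containing it are transferred (between the main memory block and the external block), and this counts as one IO operation. *)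

(* Defs.v *)
From mathcomp Require Import all_boot.

Set Implicit Arguments.
Unset Strict Implicit.
Unset Printing Implicit Defensive.

Inductive move := MoveL | MoveS | MoveR.

Inductive skind := Normal | ReadSt | WriteSt.

Inductive aop := AKeep | AZero | AInc | ADec | ADbl.

(* A machine (the same syntax is used for TM-TLM and TM-TLM-BT; only the
   semantics of an IO operation differs). *)
Record TLM (Sigma : finType) := {
  tQ : finType;
  tG : finType;
  tblank : tG;
  temb : Sigma -> tG;
  temb_inj : injective temb;
  temb_nblank : forall a, temb a <> tblank;
  tq0 : tQ;
  tqacc : tQ;
  tkind : tQ -> skind;
  (* transition function on the main memory tape; it also receives the
     test "address = 0" and acts on the address tape *)
  tdelta : tQ -> tG -> bool -> tQ * tG * move * aop;
  (* after a Read/Write in state q: next state and main-head move *)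
  tio : tQ -> tQ * move }.

Record config (Q G : Type) := Cfg {
  cst : Q;
  cmain : nat -> G;     (* main memory tape (only cells < M are used) *)
  chd : nat;
  cext : nat -> G;
  caddr : nat }.        (* content (address) of the address tape *)

Definition mv (M h : nat) (m : move) : nat :=
  match m with
  | MoveL => h.-1
  | MoveS => h
  | MoveR => if h.+1 < M then h.+1 else h
  end.

Definition aupd (a : nat) (o : aop) : nat :=
  match o with
  | AKeep => a | AZero => 0 | AInc => a.+1 | ADec => a.-1 | ADbl => a.*2
  end.

Section Sem.
Variable Sigma : finType.
Variable mach : TLM Sigma.
Local Notation Q := (tQ mach).
Local Notation G := (tG mach).
Local Notation cfg := (config Q G).

Definition cell_read (c : cfg) : nat -> G :=
  fun i => if i == chd c then cext c (caddr c) else cmain c i.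
Definition cell_write (c : cfg) : nat -> G :=
  fun j => if j == caddr c then cmain c (chd c) else cext c j.

Definition block_read (B : nat) (c : cfg) : nat -> G :=
  let h0 := chd c %/ B * B in
  let a0 := caddr c %/ B * B in
  fun i => if (h0 <= i) && (i < h0 + B) then cext c (a0 + (i - h0))
           else cmain c i.
Definition block_write (B : nat) (c : cfg) : nat -> G :=
  let h0 := chd c %/ B * B in
  let a0 := caddr c %/ B * B in
  fun j => if (a0 <= j) && (j < a0 + B) then cmain c (h0 + (j - a0))
           else cext c j.

(* One step, parameterised by the IO semantics.  Returns the new
   configuration, the time cost and the IO cost of the step. *)
Definition gstep (M : nat) (rd wr : cfg -> nat -> G) (c : cfg)
  : cfg * nat * nat :=
  match @tkind _ mach (cst c) with
  | Normal =>
      let: (q', g, m, o) := @tdelta _ mach (cst c) (cmain c (chd c)) (caddr c == 0) in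
      (Cfg q' (fun i => if i == chd c then g else cmain c i)
           (mv M (chd c) m) (cext c) (aupd (caddr c) o), 1, 0)
  | ReadSt =>
      let: (q', m) := @tio _ mach (cst c) in
      (Cfg q' (rd c) (mv M (chd c) m) (cext c) (caddr c), 0, 1)
  | WriteSt =>
      let: (q', m) := @tio _ mach (cst c) in
      (Cfg q' (cmain c) (mv M (chd c) m) (wr c) (caddr c), 0, 1)
  end.

Fixpoint grun (M : nat) (rd wr : cfg -> nat -> G) (n : nat) (c : cfg)
  : option (cfg * nat * nat) :=
  if cst c == @tqacc _ mach then Some (c, 0, 0) else
  match n with
  | 0 => None
  | n'.+1 =>
      let: (c', t, i) := gstep M rd wr c in
      match grun M rd wr n' c' with
      | Some (cf, t', i') => Some (cf, t + t', i + i')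
      | None => None
      end
  end.

Definition init (w : seq Sigma) : cfg :=
  Cfg (@tq0 _ mach) (fun _ => tblank mach) 0
      (fun i => nth (tblank mach) (map (temb mach) w) i) 0.

(* output convention: f(w) in external cells 0..|f(w)|-1, followed by blank *)
Definition output_is (c : cfg) (y : seq Sigma) : Prop :=
  forall i, i <= size y -> cext c i = nth (tblank mach) (map (temb mach) y) i.

Definition computes_in (M : nat) (rd wr : cfg -> nat -> G)
  (f : seq Sigma -> seq Sigma) (T IO : nat -> nat) : Prop :=
  (forall w, exists n cf t io,
      grun M rd wr n (init w) = Some (cf, t, io) /\ output_is cf (f w)) /\
  (exists C N, forall w, N <= size w ->
      exists n cf t io, grun M rd wr n (init w) = Some (cf, t, io) /\
        t <= C * T (size w) /\ io <= C * IO (size w)).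

End Sem.

Definition TLM_computes (Sigma : finType) (M : nat) (mach : TLM Sigma)
  (f : seq Sigma -> seq Sigma) (T IO : nat -> nat) : Prop :=
  computes_in M (@cell_read Sigma mach) (@cell_write Sigma mach) f T IO.

Definition TLMBT_computes (Sigma : finType) (M B : nat) (mach : TLM Sigma)
  (f : seq Sigma -> seq Sigma) (T IO : nat -> nat) : Prop :=
  computes_in M (@block_read Sigma mach B) (@block_write Sigma mach B) f T IO.

(* Main.v *)
From HB Require Import structures.
Require Import Defs.
From mathcomp Require Import all_boot.
From mathcomp Require Import zify.
From Stdlib Require Import FunctionalExtensionality.

Set Implicit Arguments.
Unset Strict Implicit.
Unset Printing Implicit Defensive.

Inductive ctrl (n : nat) :=
  Run | CA of 'I_n | CL of 'I_n | CIO of 'I_n | CInc of 'I_n | CD of 'I_n | CG of 'I_n.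
Arguments Run {n}.

Definition cenc n (c : ctrl n) : option ('I_n + 'I_n + 'I_n + 'I_n + 'I_n + 'I_n) :=
  match c with
  | Run => None
  | CA j => Some (inl (inl (inl (inl (inl j)))))
  | CL j => Some (inl (inl (inl (inl (inr j)))))
  | CIO j => Some (inl (inl (inl (inr j))))
  | CInc j => Some (inl (inl (inr j)))
  | CD j => Some (inl (inr j))
  | CG j => Some (inr j)
  end.
Definition cdec n (x : option ('I_n + 'I_n + 'I_n + 'I_n + 'I_n + 'I_n)) : ctrl n :=
  match x with
  | None => Run
  | Some (inl (inl (inl (inl (inl j))))) => CA j
  | Some (inl (inl (inl (inl (inr j))))) => CL j
  | Some (inl (inl (inl (inr j)))) => CIO j
  | Some (inl (inl (inr j))) => CInc j
  | Some (inl (inr j)) => CD j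
  | Some (inr j) => CG j
  end.
Lemma cencK n : cancel (@cenc n) (@cdec n). Proof. by case. Qed.
HB.instance Definition _ n := Finite.copy (ctrl n) (can_type (@cencK n)).

Section Sim.
Variable Sigma : finType.
Variable mach : TLM Sigma.
Variables M' B' : nat.
Local Notation M := M'.+1.
Local Notation B := B'.+1.
Local Notation Q := (tQ mach).
Local Notation G := (tG mach).

Definition SQ : finType := (Q * 'I_M * 'I_M * ctrl M)%type.

Definition mk (q : Q) (h r : 'I_M) : SQ :=
  if q == @tqacc _ mach then (q, ord0, ord0, Run) else (q, h, r, Run).

Definition rupd (r : nat) (o : aop) (z : bool) : nat :=
  match o with
  | AKeep => r | AZero => 0 | AInc => r.+1 %% B
  | ADec => if z then 0 else (r + B') %% B
  | ADbl => r.*2 %% B end.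

Definition sdelta (s : SQ) (g : G) (z : bool) : SQ * G * move * aop :=
  let: (q, h, r, c) := s in
  match c with
  | Run => match @tkind _ mach q with
           | Normal => let: (q1, g1, m, o) := @tdelta _ mach q g z in
                       (mk q1 (inord (mv M h m)) (inord (rupd r o z)), g1, m, o)
           | _ => ((q, h, r, CA r), g, MoveS, AKeep)
           end
  | CA j => if val j == 0 then ((q,h,r,CL (inord (h %% B))), g, MoveS, AKeep)
            else ((q,h,r,CA (inord j.-1)), g, MoveS, ADec)
  | CL j => if val j == 0 then ((q,h,r,CIO ord0), g, MoveS, AKeep)
            else ((q,h,r,CL (inord j.-1)), g, MoveL, AKeep)
  | CIO k => ((q,h,r,c), g, MoveS, AKeep)
  | CInc k => if val k == B' then ((q,h,r,CD (inord (B' - r))), g, MoveS, AKeep)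
              else ((q,h,r,CIO (inord k.+1)), g, MoveR, AInc)
  | CD j => if val j == 0 then ((q,h,r,CG (inord (h %/ B * B + B'))), g, MoveS, AKeep)
            else ((q,h,r,CD (inord j.-1)), g, MoveS, ADec)
  | CG p => if val p == mv M h (@tio _ mach q).2 then
              (mk (@tio _ mach q).1 (inord (mv M h (@tio _ mach q).2)) r, g, MoveS, AKeep)
            else if val p < mv M h (@tio _ mach q).2 then ((q,h,r,CG (inord p.+1)), g, MoveR, AKeep)
            else ((q,h,r,CG (inord p.-1)), g, MoveL, AKeep)
  end.

Definition skind (s : SQ) : Defs.skind :=
  let: (q, h, r, c) := s in
  match c with
  | CIO _ => if @tkind _ mach q is WriteSt then WriteSt else ReadSt
  | _ => Normal
  end.

Definition sio (s : SQ) : SQ * move :=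
  let: (q, h, r, c) := s in
  match c with
  | CIO k => ((q,h,r,CInc k), MoveS)
  | _ => (s, MoveS)
  end.

Definition sim : TLM Sigma :=
  @Build_TLM Sigma SQ G (@tblank _ mach) (@temb _ mach) (@temb_inj _ mach) (@temb_nblank _ mach)
    (mk (@tq0 _ mach) ord0 ord0) (@tqacc _ mach, ord0, ord0, Run) skind sdelta sio.


Local Notation cfgS := (config SQ G).
Local Notation stepS d := (@gstep _ sim M (@cell_read _ sim) (@cell_write _ sim) d).
Local Notation runS n d := (@grun _ sim M (@cell_read _ sim) (@cell_write _ sim) n d).

Inductive reach : cfgS -> cfgS -> nat -> nat -> Prop :=
| reach0 d : reach d d 0 0
| reachS d d1 d2 t i t2 i2 : cst d != @tqacc _ sim -> stepS d = (d1, t, i) ->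
    reach d1 d2 t2 i2 -> reach d d2 (t + t2) (i + i2).

Lemma reach_grun d d' t i n df t2 i2 : reach d d' t i -> runS n d' = Some (df, t2, i2) ->
  exists n', runS n' d = Some (df, t + t2, i + i2).
Proof.
elim=> [{}d|{}d d1 {}d2 t1 i1 t3 i3 Hn Hs _ IH] H; first by exists n.
have [n' Hn'] := IH H.
exists n'.+1 => /=; rewrite (negbTE Hn) Hs Hn'; by rewrite !addnA.
Qed.

Lemma reach_trans d1 d2 d3 t1 i1 t2 i2 : reach d1 d2 t1 i1 -> reach d2 d3 t2 i2 ->
  reach d1 d3 (t1 + t2) (i1 + i2).
Proof.
elim=> [//|d d1' d2' t i t3 i3 Hn Hs _ IH] H.
rewrite -!addnA; apply: reachS Hn Hs _; exact: IH.
Qed.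

Lemma reach_eq d d' t i t' i' : reach d d' t i -> t = t' -> i = i' -> reach d d' t' i'.
Proof. by move=> H <- <-. Qed.

Lemma nacc q h r (c : ctrl M) : c != Run -> ((q, h, r, c) : SQ) != @tqacc _ sim.
Proof. move=> hc; apply/eqP => [[_ _ _ E]]; by rewrite E eqxx in hc. Qed.


Lemma naccq q h r (c : ctrl M) : q != @tqacc _ mach -> ((q, h, r, c) : SQ) != @tqacc _ sim.
Proof. move=> hc; apply/eqP => [[E _ _ _]]; by rewrite E eqxx in hc. Qed.

Lemma rstep (s s' : SQ) main h ext a m o d2 t i :
  s != @tqacc _ sim -> skind s = Normal ->
  sdelta s (main h) (a == 0) = (s', main h, m, o) ->
  reach (Cfg s' main (mv M h m) ext (aupd a o)) d2 t i ->
  reach (Cfg s main h ext a) d2 t.+1 i.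
Proof.
move=> Hn Hk Hd Hr; apply: (reach_eq (reachS (d := Cfg s main h ext a) (t := 1) (i := 0) Hn _ Hr)) => //.
rewrite /gstep /= Hk Hd; congr (_, _, _); congr Cfg.
by apply: functional_extensionality => x; case: eqP => // ->.
Qed.

Lemma rstepR (s s' : SQ) main h ext a m d2 t i :
  s != @tqacc _ sim -> skind s = ReadSt -> sio s = (s', m) ->
  reach (Cfg s' (fun x => if x == h then ext a else main x) (mv M h m) ext a) d2 t i ->
  reach (Cfg s main h ext a) d2 t i.+1.
Proof.
move=> Hn Hk Hd Hr; apply: (reach_eq (reachS (d := Cfg s main h ext a) (t := 0) (i := 1) Hn _ Hr)) => //.
by rewrite /gstep /= Hk Hd.
Qed.

Lemma rstepW (s s' : SQ) main h ext a m d2 t i :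
  s != @tqacc _ sim -> skind s = WriteSt -> sio s = (s', m) ->
  reach (Cfg s' main (mv M h m) (fun x => if x == a then main h else ext x) a) d2 t i ->
  reach (Cfg s main h ext a) d2 t i.+1.
Proof.
move=> Hn Hk Hd Hr; apply: (reach_eq (reachS (d := Cfg s main h ext a) (t := 0) (i := 1) Hn _ Hr)) => //.
by rewrite /gstep /= Hk Hd.
Qed.

Lemma reach_refl d d' : d = d' -> reach d d' 0 0.
Proof. by move=> ->; constructor. Qed.


Hypothesis HBM : B %| M.

Lemma BleM : B <= M.
Proof. exact: dvdn_leq. Qed.

Lemma blk h : h < M -> h %/ B * B + B <= M.
Proof.
move: HBM => /dvdnP [k Hk] hM.
have : h %/ B < k by rewrite ltn_divLR // -Hk.
rewrite Hk => hk; rewrite -mulSnr; exact: leq_mul.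
Qed.

Lemma skN q h r (c : ctrl M) : (if c is CIO _ then false else true) -> skind ((q, h, r, c) : SQ) = Normal.
Proof. by case: c. Qed.

Lemma phaseA q (hI rI : 'I_M) j main hd ext a : j < M -> j <= a ->
  reach (Cfg (q, hI, rI, CA (inord j)) main hd ext a)
        (Cfg (q, hI, rI, CL (inord (hI %% B))) main hd ext (a - j)) j.+1 0.
Proof.
elim: j a => [|j IH] a hj ha.
  apply: rstep; [exact: nacc | exact: skN | by rewrite /= inordK |].
  apply: reach_refl; by rewrite subn0.
apply: rstep; [exact: nacc | exact: skN | by rewrite /= inordK |].
rewrite /=; have -> : a - j.+1 = a.-1 - j by lia.
apply: IH; lia.
Qed.

Lemma phaseL q (hI rI : 'I_M) j main hd ext a : j < M -> j <= hd ->
  reach (Cfg (q, hI, rI, CL (inord j)) main hd ext a)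
        (Cfg (q, hI, rI, CIO ord0) main (hd - j) ext a) j.+1 0.
Proof.
elim: j hd => [|j IH] hd hj ha.
  apply: rstep; [exact: nacc | exact: skN | by rewrite /= inordK |].
  apply: reach_refl; by rewrite subn0.
apply: rstep; [exact: nacc | exact: skN | by rewrite /= inordK |].
rewrite /=; have -> : hd - j.+1 = hd.-1 - j by lia.
apply: IH; lia.
Qed.

Lemma phaseD q (hI rI : 'I_M) j main hd ext a : j < M -> j <= a ->
  reach (Cfg (q, hI, rI, CD (inord j)) main hd ext a)
        (Cfg (q, hI, rI, CG (inord (hI %/ B * B + B'))) main hd ext (a - j)) j.+1 0.
Proof.
elim: j a => [|j IH] a hj ha.
  apply: rstep; [exact: nacc | exact: skN | by rewrite /= inordK |].
  apply: reach_refl; by rewrite subn0.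
apply: rstep; [exact: nacc | exact: skN | by rewrite /= inordK |].
rewrite /=; have -> : a - j.+1 = a.-1 - j by lia.
apply: IH; lia.
Qed.


Definition prd (ext main0 : nat -> G) (h0 a0 k : nat) : nat -> G :=
  fun i => if (h0 <= i) && (i < h0 + k) then ext (a0 + (i - h0)) else main0 i.

Lemma prdS ext main0 h0 a0 k :
  prd ext main0 h0 a0 k.+1 = fun x => if x == h0 + k then ext (a0 + k) else prd ext main0 h0 a0 k x.
Proof.
apply: functional_extensionality => x; rewrite /prd.
case: eqP => [->|ne]; first by rewrite leq_addr addnS ltnSn /= addKn.
by have -> : (h0 <= x) && (x < h0 + k.+1) = (h0 <= x) && (x < h0 + k) by
  apply/idP/idP => /andP [H1 H2]; apply/andP; split => //; lia.
Qed.

Definition prw (main ext0 : nat -> G) (h0 a0 k : nat) : nat -> G :=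
  fun j => if (a0 <= j) && (j < a0 + k) then main (h0 + (j - a0)) else ext0 j.

Lemma prwS main ext0 h0 a0 k :
  prw main ext0 h0 a0 k.+1 = fun x => if x == a0 + k then main (h0 + k) else prw main ext0 h0 a0 k x.
Proof.
apply: functional_extensionality => x; rewrite /prw.
case: eqP => [->|ne]; first by rewrite leq_addr addnS ltnSn /= addKn.
by have -> : (a0 <= x) && (x < a0 + k.+1) = (a0 <= x) && (x < a0 + k) by
  apply/idP/idP => /andP [H1 H2]; apply/andP; split => //; lia.
Qed.

Lemma dInc1 q hI rI k g z : k < B' ->
  sdelta ((q, hI, rI, CInc (inord k)) : SQ) g z = ((q, hI, rI, CIO (inord k.+1)), g, MoveR, AInc).
Proof.
move=> hk; have := BleM => hB.
rewrite /= inordK; last lia.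
by rewrite ifN_eq //; apply/eqP; lia.
Qed.

Lemma dInc2 q hI (rI : 'I_M) g z :
  sdelta ((q, hI, rI, CInc (inord B')) : SQ) g z = ((q, hI, rI, CD (inord (B' - rI))), g, MoveS, AKeep).
Proof.
have := BleM => hB.
rewrite /= inordK; last lia.
by rewrite eqxx.
Qed.

Lemma loopR q (hI rI : 'I_M) (Hq : @tkind _ mach q = ReadSt) ext main0 h0 a0 :
  h0 + B <= M -> forall n k, k + n = B' ->
  reach (Cfg (q, hI, rI, CIO (inord k)) (prd ext main0 h0 a0 k) (h0 + k) ext (a0 + k))
        (Cfg (q, hI, rI, CD (inord (B' - rI))) (prd ext main0 h0 a0 B) (h0 + B') ext (a0 + B'))
        n.+1 n.+1.
Proof.
move=> hM; elim=> [|n IH] k hk.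
  rewrite addn0 in hk; subst k.
  apply: rstepR; [exact: nacc | by rewrite /= Hq | by [] |].
  apply: rstep; [exact: nacc | by [] | exact: dInc2 |].
  apply: reach_refl; by rewrite /= -prdS.
apply: rstepR; [exact: nacc | by rewrite /= Hq | by [] |].
apply: rstep; [exact: nacc | by [] | apply: dInc1; lia |].
rewrite -prdS /= ifT; last lia.
rewrite -!addnS; apply: IH; lia.
Qed.

Lemma loopW q (hI rI : 'I_M) (Hq : @tkind _ mach q = WriteSt) main ext0 h0 a0 :
  h0 + B <= M -> forall n k, k + n = B' ->
  reach (Cfg (q, hI, rI, CIO (inord k)) main (h0 + k) (prw main ext0 h0 a0 k) (a0 + k))
        (Cfg (q, hI, rI, CD (inord (B' - rI))) main (h0 + B') (prw main ext0 h0 a0 B) (a0 + B'))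
        n.+1 n.+1.
Proof.
move=> hM; elim=> [|n IH] k hk.
  rewrite addn0 in hk; subst k.
  apply: rstepW; [exact: nacc | by rewrite /= Hq | by [] |].
  apply: rstep; [exact: nacc | by [] | exact: dInc2 |].
  apply: reach_refl; by rewrite /= -prwS.
apply: rstepW; [exact: nacc | by rewrite /= Hq | by [] |].
apply: rstep; [exact: nacc | by [] | apply: dInc1; lia |].
rewrite -prwS /= ifT; last lia.
rewrite -!addnS; apply: IH; lia.
Qed.

Lemma mv_lt h m : h < M -> mv M h m < M.
Proof. by case: m => /=; [lia | done | case: ifP]. Qed.

Lemma phaseG q (hI rI : 'I_M) main ext a : forall n p, p < M ->
  (p - mv M hI (@tio _ mach q).2) + (mv M hI (@tio _ mach q).2 - p) = n ->
  reach (Cfg (q, hI, rI, CG (inord p)) main p ext a)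
        (Cfg (mk (@tio _ mach q).1 (inord (mv M hI (@tio _ mach q).2)) rI) main
             (mv M hI (@tio _ mach q).2) ext a) n.+1 0.
Proof.
have ht := mv_lt (@tio _ mach q).2 (ltn_ord hI).
set tt := mv M hI _ in ht *.
elim=> [|n IH] p hp hd.
  have ep : p = tt by lia.
  apply: rstep; [exact: nacc | by [] | by rewrite /= inordK // -/tt ep eqxx |].
  by apply: reach_refl; rewrite ep.
case: (ltngtP p tt) => hpt.
- apply: rstep; [exact: nacc | by [] | by rewrite /= inordK // -/tt ifN_eq ?hpt //; lia |].
  rewrite /= ifT; last lia.
  apply: IH; lia.
- apply: rstep; [exact: nacc | by [] | rewrite /= inordK // -/tt ifN_eq; last lia |].
    by rewrite ltnNge ltnW.
  apply: IH; lia.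
- lia.
Qed.


Definition enc (c : config Q G) : cfgS :=
  Cfg (mk (cst c) (inord (chd c)) (inord (caddr c %% B))) (cmain c) (chd c) (cext c) (caddr c).

Local Notation stepB c := (@gstep _ mach M (@block_read _ mach B) (@block_write _ mach B) c).
Local Notation runB n c := (@grun _ mach M (@block_read _ mach B) (@block_write _ mach B) n c).

Lemma reach_conv d d' d2 t i : d = d' -> reach d' d2 t i -> reach d d2 t i.
Proof. by move=> ->. Qed.
Lemma reach_convR d d2 d2' t i : d2 = d2' -> reach d d2 t i -> reach d d2' t i.
Proof. by move=> ->. Qed.

Lemma rupdE a o : rupd (a %% B) o (a == 0) = aupd a o %% B.
Proof.
case: o => /=.
- by [].
- by rewrite mod0n.
- by rewrite -addn1 modnDml addn1.
- case: a => [|a] //=.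
  by rewrite modnDml addSnnS modnDr.
- by rewrite -!muln2 modnMml.
Qed.

Lemma modB_lt a : a %% B < M.
Proof. have := BleM; have := ltn_pmod a (ltn0Sn B'); lia. Qed.

Lemma mv_range h m : h.-1 <= mv M h m <= h.+1.
Proof. case: m => /=; [lia | lia | case: ifP; lia]. Qed.

Lemma simN c c1 t1 i1 : cst c != @tqacc _ mach -> chd c < M -> @tkind _ mach (cst c) = Normal ->
  stepB c = (c1, t1, i1) -> reach (enc c) (enc c1) t1 i1.
Proof.
case: c => q main h ext a /= Hn hM Hk.
rewrite /gstep /= Hk.
case E: (@tdelta _ mach q (main h) (a == 0)) => [[[q1 g1] m] o] [<- <- <-].
apply: (reach_eq (reachS (d := enc (Cfg q main h ext a)) (t := 1) (i := 0) _ _ (reach0 _))) => //.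
  by rewrite /enc /mk /= (negbTE Hn) naccq.
rewrite /enc /gstep /mk /= (negbTE Hn) /= Hk E /= inordK // inordK ?modB_lt // rupdE.
by [].
Qed.


Lemma simR c c1 t1 i1 : cst c != @tqacc _ mach -> chd c < M -> @tkind _ mach (cst c) = ReadSt ->
  stepB c = (c1, t1, i1) -> exists t', reach (enc c) (enc c1) t' (B * i1) /\ t' <= t1 + 7 * B * i1.
Proof.
case: c => q main h ext a /= Hn hM Hk.
rewrite /gstep /= Hk.
case E: (@tio _ mach q) => [q' m] [<- <- <-].
have hIv : val (inord h : 'I_M) = h := inordK hM.
have rIv : val (inord (a %% B) : 'I_M) = a %% B := inordK (modB_lt a).
have hB := BleM.
have hhB : h %% B < B := ltn_pmod h (ltn0Sn B').
have haB : a %% B < B := ltn_pmod a (ltn0Sn B').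
have eh := divn_eq h B. have ea := divn_eq a B.
have hblk := blk hM.
set hI := (inord h : 'I_M) in hIv *.
set rI := (inord (a %% B) : 'I_M) in rIv *.
set h0 := h %/ B * B in eh hblk *.
set a0 := a %/ B * B in ea *.
have R1 : reach (enc (Cfg q main h ext a)) (Cfg (q, hI, rI, CA rI) main h ext a) 1 0.
  rewrite /enc /mk /= (negbTE Hn).
  apply: rstep; [exact: naccq | by [] | by rewrite /= Hk | exact: reach_refl].
have R2 := phaseA q hI rI main h ext (modB_lt a) (leq_mod a B).
have hrM : hI %% B < M by rewrite hIv; exact: leq_trans hhB hB.
have R3 := @phaseL q hI rI (hI %% B) main h ext (a - a %% B) hrM ltac:(rewrite hIv; exact: leq_mod).
have R4 := @loopR q hI rI Hk ext main h0 a0 hblk B' 0 (add0n _).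
have C34 : Cfg (q, hI, rI, CIO ord0) main (h - hI %% B) ext (a - a %% B) =
           Cfg (q, hI, rI, CIO (inord 0)) (prd ext main h0 a0 0) (h0 + 0) ext (a0 + 0) :> cfgS.
  have -> : (inord 0 : 'I_M) = ord0 by apply: val_inj; rewrite /= inordK.
  congr Cfg.
  - by apply: functional_extensionality => x; rewrite /prd; case: ifP => //; lia.
  - rewrite hIv; lia.
  - lia.
have hrB : B' - rI < M by lia.
have R5 := @phaseD q hI rI (B' - rI) (prd ext main h0 a0 B) (h0 + B') ext (a0 + B') hrB ltac:(lia).
set p := h0 + B'.
have hp : p < M by lia.
have ht := mv_range h m.
have htM : mv M h m < M := mv_lt m hM.
have R6 := @phaseG q hI rI (prd ext main h0 a0 B) ext (a0 + B' - (B' - rI)) _ p hp erefl.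
have C56 : Cfg (q, hI, rI, CG (inord (hI %/ B * B + B'))) (prd ext main h0 a0 B) (h0 + B') ext (a0 + B' - (B' - rI)) =
           Cfg (q, hI, rI, CG (inord p)) (prd ext main h0 a0 B) p ext (a0 + B' - (B' - rI)) :> cfgS.
  by rewrite hIv.
have C6 : Cfg (mk (@tio _ mach q).1 (inord (mv M hI (@tio _ mach q).2)) rI) (prd ext main h0 a0 B)
             (mv M hI (@tio _ mach q).2) ext (a0 + B' - (B' - rI)) =
          enc (Cfg q' (@block_read _ mach B (Cfg q main h ext a)) (mv M h m) ext a).
  rewrite /enc E hIv /=; congr Cfg; try lia.
  rewrite rIv; lia.
have R := reach_trans R1 (reach_trans R2 (reach_trans R3 (reach_conv C34 (reach_trans R4
           (reach_trans R5 (reach_conv C56 (reach_convR C6 R6))))))).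
eexists; split; first by apply: (reach_eq R); [reflexivity | rewrite muln1 /=; lia].
rewrite E hIv /= in ht htM *.
lia.


Qed.
Lemma simW c c1 t1 i1 : cst c != @tqacc _ mach -> chd c < M -> @tkind _ mach (cst c) = WriteSt ->
  stepB c = (c1, t1, i1) -> exists t', reach (enc c) (enc c1) t' (B * i1) /\ t' <= t1 + 7 * B * i1.
Proof.
case: c => q main h ext a /= Hn hM Hk.
rewrite /gstep /= Hk.
case E: (@tio _ mach q) => [q' m] [<- <- <-].
have hIv : val (inord h : 'I_M) = h := inordK hM.
have rIv : val (inord (a %% B) : 'I_M) = a %% B := inordK (modB_lt a).
have hB := BleM.
have hhB : h %% B < B := ltn_pmod h (ltn0Sn B').
have haB : a %% B < B := ltn_pmod a (ltn0Sn B').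
have eh := divn_eq h B. have ea := divn_eq a B.
have hblk := blk hM.
set hI := (inord h : 'I_M) in hIv *.
set rI := (inord (a %% B) : 'I_M) in rIv *.
set h0 := h %/ B * B in eh hblk *.
set a0 := a %/ B * B in ea *.
have R1 : reach (enc (Cfg q main h ext a)) (Cfg (q, hI, rI, CA rI) main h ext a) 1 0.
  rewrite /enc /mk /= (negbTE Hn).
  apply: rstep; [exact: naccq | by [] | by rewrite /= Hk | exact: reach_refl].
have R2 := phaseA q hI rI main h ext (modB_lt a) (leq_mod a B).
have hrM : hI %% B < M by rewrite hIv; exact: leq_trans hhB hB.
have R3 := @phaseL q hI rI (hI %% B) main h ext (a - a %% B) hrM ltac:(rewrite hIv; exact: leq_mod).
have R4 := @loopW q hI rI Hk main ext h0 a0 hblk B' 0 (add0n _).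
have C34 : Cfg (q, hI, rI, CIO ord0) main (h - hI %% B) ext (a - a %% B) =
           Cfg (q, hI, rI, CIO (inord 0)) main (h0 + 0) (prw main ext h0 a0 0) (a0 + 0) :> cfgS.
  have -> : (inord 0 : 'I_M) = ord0 by apply: val_inj; rewrite /= inordK.
  congr Cfg.
  - rewrite hIv; lia.
  - by apply: functional_extensionality => x; rewrite /prw; case: ifP => //; lia.
  - lia.
have hrB : B' - rI < M by lia.
have R5 := @phaseD q hI rI (B' - rI) main (h0 + B') (prw main ext h0 a0 B) (a0 + B') hrB ltac:(lia).
set p := h0 + B'.
have hp : p < M by lia.
have ht := mv_range h m.
have htM : mv M h m < M := mv_lt m hM.
have R6 := @phaseG q hI rI main (prw main ext h0 a0 B) (a0 + B' - (B' - rI)) _ p hp erefl.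
have C56 : Cfg (q, hI, rI, CG (inord (hI %/ B * B + B'))) main (h0 + B') (prw main ext h0 a0 B) (a0 + B' - (B' - rI)) =
           Cfg (q, hI, rI, CG (inord p)) main p (prw main ext h0 a0 B) (a0 + B' - (B' - rI)) :> cfgS.
  by rewrite hIv.
have C6 : Cfg (mk (@tio _ mach q).1 (inord (mv M hI (@tio _ mach q).2)) rI) main
             (mv M hI (@tio _ mach q).2) (prw main ext h0 a0 B) (a0 + B' - (B' - rI)) =
          enc (Cfg q' main (mv M h m) (@block_write _ mach B (Cfg q main h ext a)) a).
  rewrite /enc E hIv /=; congr Cfg; try lia.
  rewrite rIv; lia.
have R := reach_trans R1 (reach_trans R2 (reach_trans R3 (reach_conv C34 (reach_trans R4
           (reach_trans R5 (reach_conv C56 (reach_convR C6 R6))))))).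
eexists; split; first by apply: (reach_eq R); [reflexivity | rewrite muln1 /=; lia].
rewrite E hIv /= in ht htM *.
lia.


Qed.

Lemma simN' c c1 t1 i1 : cst c != @tqacc _ mach -> chd c < M -> @tkind _ mach (cst c) = Normal ->
  stepB c = (c1, t1, i1) -> exists t', reach (enc c) (enc c1) t' (B * i1) /\ t' <= t1 + 7 * B * i1.
Proof.
move=> Hn hM Hk E; exists t1; split; last lia.
have := simN Hn hM Hk E.
suff -> : i1 = 0 by rewrite muln0.
move: Hk E; case: c {Hn hM} => q main h ext a /= Hk; rewrite /gstep /= Hk.
by case: (@tdelta _ mach q (main h) (a == 0)) => [[[? ?] ?] ?] [_ _ <-].
Qed.

Lemma step_hd c c1 t1 i1 : chd c < M -> stepB c = (c1, t1, i1) -> chd c1 < M.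
Proof.
case: c => q main h ext a /= hM; rewrite /gstep /=.
case: (@tkind _ mach q).
- case: (@tdelta _ mach q (main h) (a == 0)) => [[[? ?] m] ?] [<- _ _] /=; exact: mv_lt.
- case: (@tio _ mach q) => [? m] [<- _ _] /=; exact: mv_lt.
- case: (@tio _ mach q) => [? m] [<- _ _] /=; exact: mv_lt.
Qed.

Lemma acc_enc c : (cst (enc c) == @tqacc _ sim) = (cst c == @tqacc _ mach).
Proof.
rewrite /enc /mk /=; case: (eqVneq (cst c) (@tqacc _ mach)) => [E|ne].
  by rewrite E !eqxx.
exact: negbTE (naccq _ _ _ ne).
Qed.

Lemma simulate n c cf t io : chd c < M -> runB n c = Some (cf, t, io) ->
  exists n' t', runS n' (enc c) = Some (enc cf, t', B * io) /\ t' <= t + 7 * B * io.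
Proof.
elim: n c t io => [|n IH] c t io hM /=.
  case: ifP => // Ha [<- <- <-]; exists 0, 0; split; [by rewrite /= acc_enc Ha muln0 | by []].
case: ifP => Ha.
  move=> [<- <- <-]; exists 0, 0; split; [by rewrite /= acc_enc Ha muln0 | by []].
case E: (stepB c) => [[c1 t1] i1].
case E2: (runB n c1) => [[[cf' t2] i2]|] // [Ecf <- <-]; subst cf'.
have hM1 := step_hd hM E.
have [n' [t'' [H2 Ht2]]] := IH _ _ _ hM1 E2.
have Hn : cst c != @tqacc _ mach by rewrite Ha.
have [t' [R Ht']] : exists t', reach (enc c) (enc c1) t' (B * i1) /\ t' <= t1 + 7 * B * i1.
  case Hk: (@tkind _ mach (cst c)).
  - exact: simN' Hn hM Hk E.
  - exact: simR Hn hM Hk E.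
  - exact: simW Hn hM Hk E.
have [n'' H] := reach_grun R H2.
exists n'', (t' + t''); split; first by rewrite H mulnDr.
nia.
Qed.

End Sim.

Lemma initE (Sigma : finType) (mach : TLM Sigma) M' B' w :
  enc M' B' (init mach w) = init (sim mach M' B') w.
Proof.
rewrite /enc /init /=.
have -> : (inord 0 : 'I_M'.+1) = ord0 by apply: val_inj; rewrite /= inordK.
by [].
Qed.

Theorem theorem3 (Sigma : finType) (M B : nat) (T IO : nat -> nat)
  (f : seq Sigma -> seq Sigma) :
  0 < M -> 0 < B -> B %| M ->
  (exists mach : TLM Sigma, TLMBT_computes M B mach f T IO) ->
  exists mach' : TLM Sigma,
    TLM_computes M mach' f (fun n => T n + B * IO n) (fun n => B * IO n).
Proof.
case: M => [//|M'] _; case: B => [//|B'] _ hd [mach [H1 [C [N H2]]]].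
exists (sim mach M' B'); split.
  move=> w; have [n [cf [t [io [Hr Ho]]]]] := H1 w.
  have [n' [t' [Hr' _]]] := simulate hd (c := init mach w) (ltn0Sn _) Hr.
  exists n', (enc M' B' cf), t', (B'.+1 * io); split; last exact: Ho.
  by rewrite -initE.
exists (7 * C), N => w hw.
have [n [cf [t [io [Hr [Ht Hi]]]]]] := H2 w hw.
have [n' [t' [Hr' Ht']]] := simulate hd (c := init mach w) (ltn0Sn _) Hr.
exists n', (enc M' B' cf), t', (B'.+1 * io); split; first by rewrite -initE.
split; nia.
Qed.
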